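(* Let $N\ge 2$ and $T\ge 1$ be integers, let $a_1,\ldots,a_N$ be real numbers with $a_1+\cdots+a_N=1$, and let $\mu_1,\ldots,\mu_T$ be real numbers. Let $J$ be the $((N-1)T+1)\times((N-1)T+1)$ real matrix defined as follows (with $e_k$ denoting the $k$-th standard basis row vector of length $(N-1)T+1$): - for $i=1,\ldots,(N-2)T+1$, the $i$-th row of $J$ is $e_{i+T}$; - for $m=1,\ldots,T$, the $((N-2)T+1+m)$-th row of $J$ is $r_m$, where $r_0:=e_{(N-1)T+1}$ and recursively $$r_m=\mu_m\Big(a_1\, r_{m-1}+\sum_{l=2}^{N} a_l\, e_{(N-l)T+m}\Big),\qquad m=1,\ldots,T.$$ Then the eigenvalues of $J$ are precisely the (complex) roots of the polynomial $$p(\lambda)=\lambda^{(N-1)T+1}-(\mu_1\cdots\mu_T)\,\big(a_1\lambda^{N-1}+a_2\lambda^{N-2}+\cdots+a_{N-1}\lambda+a_N\big)^{T}.$$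
   Context: Motivation/setting: for a $C^1$ map $f:\mathbb{R}\to\mathbb{R}$ with a $T$-cycle $x_0^*,\ldots,x_{T-1}^*$ and the delayed feedback control $x(k+1)=f(x(k))+u(k)$, $u(k)=(a_1-1)f(x(k))+a_2f(x(k-T))+\cdots+a_Nf(x(k-(N-1)T))$, define $G:\mathbb{R}^{(N-1)T+1}\to\mathbb{R}^{(N-1)T+1}$ by $G(x_1,\ldots,x_{(N-1)T+1})=(x_2,\ldots,x_{(N-1)T+1},\,a_1f(x_{(N-1)T+1})+a_2f(x_{(N-2)T+1})+\cdots+a_Nf(x_1))$ and $F=G^T$. The matrix $J$ above is the Jacobian of $F$ at the point $(x_0^*,x_1^*,\ldots,x^*_{(N-1)T})$ (indices mod $T$), with $\mu_j$ the derivatives of $f$ along the cycle; however the statement concerns the explicitly defined matrix for arbitrary real $\mu_j$. *)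

(* Defs.v *)
From mathcomp Require Import all_boot all_order all_algebra.
From mathcomp.real_closed Require Import complex.
From mathcomp Require Import reals.
Set Implicit Arguments. Unset Strict Implicit. Unset Printing Implicit Defensive.
Import Order.TTheory GRing.Theory Num.Theory.
Local Open Scope ring_scope.

Notation dimJ N T := ((N.-1 * T)%N.+1).

(* e_k : k-th standard basis row vector, 1-based index k (1 <= k <= (N-1)T+1) *)
Definition ebasis {R : nzRingType} (n : nat) (k : nat) : 'rV[R]_n.+1 :=
  delta_mx 0 (inord k.-1).

Fixpoint rrow {R : nzRingType} (N T : nat) (a mu : nat -> R) (m : nat)
  : 'rV[R]_(dimJ N T) :=
  match m with
  | 0 => ebasis (N.-1 * T) (N.-1 * T).+1
  | m'.+1 => mu m *: (a 1%N *: rrow N T a mu m'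
                     + \sum_(2 <= l < N.+1) a l *: ebasis (N.-1 * T) ((N - l) * T + m))
  end.

(* J (0-based row index i): row i+1 (1-based) is e_{i+1+T} when i+1 <= (N-2)T+1,
   otherwise row (N-2)T+1+m is r_m with m = i - (N-2)T. *)
Definition Jmat {R : nzRingType} (N T : nat) (a mu : nat -> R) : 'M[R]_(dimJ N T) :=
  \matrix_(i, j) (if (i < (N - 2) * T + 1)%N
                  then ebasis (N.-1 * T) (i + 1 + T) 0 j
                  else rrow N T a mu (i - (N - 2) * T) 0 j).

Definition pchar {R : nzRingType} (N T : nat) (a mu : nat -> R) : {poly R} :=
  'X^(dimJ N T) - (\prod_(1 <= m < T.+1) mu m)%:P
                  * (\sum_(1 <= l < N.+1) a l *: 'X^(N - l)) ^+ T.

(* Main.v *)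
Require Import Defs.
From mathcomp Require Import all_boot all_order all_algebra.
From mathcomp.real_closed Require Import complex.
From mathcomp Require Import reals.
From mathcomp Require Import ring zify.
Import Order.TTheory GRing.Theory Num.Theory.
Local Open Scope ring_scope.

Lemma char_poly_tr (F : fieldType) (m : nat) (A : 'M[F]_m) : char_poly A^T = char_poly A.
Proof.
rewrite /char_poly -det_tr; congr (\det _).
by apply/matrixP => i j; rewrite !mxE eq_sym.
Qed.

Section Pure.
Variables (F : fieldType) (N T : nat) (a mu : nat -> F) (lam : F).
Hypotheses (HN : (2 <= N)%N) (HT : (1 <= T)%N).
Local Notation n := (N.-1 * T)%N.

Fixpoint S (f : nat -> F) (m : nat) : F :=
  match m with
  | 0 => f n
  | m'.+1 => mu m * (a 1%N * S f m' + \sum_(2 <= l < N.+1) a l * f ((N - l) * T + m')%N)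
  end.

Definition P := \sum_(1 <= l < N.+1) a l * lam ^+ (N - l).
Definition Q := \sum_(2 <= l < N.+1) a l * lam ^+ (N - l).

Lemma P_split : P = a 1%N * lam ^+ N.-1 + Q.
Proof. rewrite /P big_ltn; last lia. by rewrite /Q subn1. Qed.

Lemma nT : n = ((N - 2) * T + T)%N.
Proof. have -> : N.-1 = (N - 2).+1 by lia. by rewrite mulSn addnC. Qed.

Definition Sh (f : nat -> F) := forall q j, (j < T)%N -> (j + q * T <= n)%N ->
  f (j + q * T)%N = lam ^+ q * f j.
Definition g (f : nat -> F) m := if (m < T)%N then f m else lam * f 0%N.
Definition Rr (f : nat -> F) := forall m, (m < T)%N ->
  lam ^+ N.-1 * g f m.+1 = mu m.+1 * P * g f m.
Definition E (f : nat -> F) := forall k, (k <= n)%N ->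
  (if (k < (N - 2) * T + 1)%N then f (k + T)%N else S f (k - (N - 2) * T)) = lam * f k.

Lemma S_step f : Sh f -> forall m, (m < T)%N -> S f m.+1 = mu m.+1 * (a 1%N * S f m + Q * f m).
Proof.
move=> hS m hm /=; congr (_ * (_ + _)); rewrite /Q mulr_suml.
apply: eq_big_nat => l /andP[hl1 hl2].
have hle : ((N - l) * T <= (N - 2) * T)%N by apply: leq_mul => //; apply: leq_sub2l.
rewrite addnC hS //; first by rewrite mulrA.
by rewrite nT; lia.
Qed.

Lemma S0 f : Sh f -> S f 0 = lam ^+ N.-1 * f 0%N.
Proof. move=> hS /=. by have := hS N.-1 0%N HT (leqnn _); rewrite add0n. Qed.

Lemma E_Sh {f} : E f -> Sh f.
Proof.
move=> hE; elim=> [|q IH] j hj hb; first by rewrite mul0n addn0 expr0 mul1r.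
have hb' : (j + q * T + T <= n)%N by move: hb; rewrite mulSn; lia.
have -> : (j + q.+1 * T = j + q * T + T)%N by rewrite mulSn; lia.
have := hE (j + q * T)%N; rewrite ifT; last by move: hb'; rewrite nT; lia.
move=> ->; last by lia.
rewrite IH //; last by lia.
by rewrite exprS mulrA.
Qed.

Lemma L_form f : Sh f -> forall m, (m < T)%N ->
  lam * f ((N - 2) * T + m.+1)%N = lam ^+ N.-1 * g f m.+1.
Proof.
move=> hS m hm; rewrite /g; case: ifP => hm1.
  rewrite addnC hS //; last by rewrite nT; lia.
  have -> : N.-1 = (N - 2).+1 by lia.
  by rewrite exprS mulrA.
have -> : m.+1 = T by lia.
have := hS N.-1 0%N HT (leqnn _); rewrite add0n -nT => ->.
by rewrite mulrA mulrCA mulrA.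
Qed.

Lemma Sg f : E f -> Sh f -> forall m, (m <= T)%N -> S f m = lam ^+ N.-1 * g f m.
Proof.
move=> hE hS [|m] hm; first by rewrite S0 // /g HT.
have := hE ((N - 2) * T + m.+1)%N; rewrite ifF; last by lia.
rewrite [X in S f X](_ : _ = m.+1); last by lia.
move=> ->; last by rewrite nT; lia.
by rewrite L_form.
Qed.

Lemma E_Rr {f} : E f -> Rr f.
Proof.
move=> hE m hm; have hS := E_Sh hE.
rewrite -Sg // S_step // Sg //; last by lia.
have -> : f m = g f m by rewrite /g hm.
by rewrite P_split; ring.
Qed.

Lemma Sg' f : Sh f -> Rr f -> forall m, (m <= T)%N -> S f m = lam ^+ N.-1 * g f m.
Proof.
move=> hS hR; elim=> [|m IH] hm; first by rewrite S0 // /g HT.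
rewrite S_step // IH; last by lia.
rewrite hR //. have -> : f m = g f m by rewrite /g ifT.
by rewrite P_split; ring.
Qed.

Lemma ShRr_E f : Sh f -> Rr f -> E f.
Proof.
move=> hS hR k hk; case: ifP => hk1.
  have hT0 : (0 < T)%N by [].
  have hj : (k %% T < T)%N by rewrite ltn_mod.
  have hk' := divn_eq k T.
  have -> : (k + T = k %% T + (k %/ T).+1 * T)%N by rewrite mulSn; lia.
  rewrite hS //; last by rewrite mulSn; move: hk1; rewrite nT; lia.
  rewrite {3}hk' addnC hS //; last by lia.
  by rewrite exprS mulrA.
have -> : (k - (N - 2) * T = (k - (N - 2) * T - 1).+1)%N by lia.
rewrite Sg' //; last by move: hk; rewrite nT; lia.
rewrite -L_form //; last by move: hk; rewrite nT; lia.
by congr (_ * f _); lia.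
Qed.

Lemma ID {f} : Rr f -> forall m, (m <= T)%N ->
  lam ^+ (N.-1 * m) * g f m = (\prod_(1 <= k < m.+1) (mu k * P)) * g f 0.
Proof.
move=> hR; elim=> [|m IH] hm; first by rewrite muln0 expr0 mul1r big_geq // mul1r.
rewrite mulnS exprD -mulrA mulrCA hR // mulrCA IH; last by lia.
rewrite [in RHS]big_nat_recr //=; ring.
Qed.

Lemma prodP_eq0 (k0 : nat) : (1 <= k0 <= T)%N -> mu k0 * P = 0 ->
  \prod_(1 <= k < T.+1) (mu k * P) = 0.
Proof.
move=> hk h0; apply/eqP; rewrite prodf_seq_eq0; apply/hasP; exists k0.
  by rewrite mem_index_iota; lia.
by rewrite h0 eqxx.
Qed.

Lemma fwd f : E f -> (exists2 k, (k <= n)%N & f k != 0) ->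
  lam ^+ n.+1 = \prod_(1 <= k < T.+1) (mu k * P).
Proof.
move=> hE [k hk fk]; have hS := E_Sh hE; have hR := E_Rr hE.
have hj : (k %% T < T)%N by rewrite ltn_mod.
have fj : f (k %% T)%N != 0.
  move: fk; rewrite {1}(divn_eq k T) addnC hS //; last by rewrite addnC -divn_eq.
  by rewrite mulf_eq0 negb_or => /andP[].
have := ID hR T (leqnn T); rewrite /g ltnn HT => hI.
case: (eqVneq (f 0%N) 0) => f0; last first.
  apply: (mulIf f0); by rewrite exprSr -mulrA hI.
have hj0 : (k %% T != 0)%N by apply/eqP => e; move: fj; rewrite e f0 eqxx.
have := ID hR _ (ltnW hj); rewrite /g hj HT f0 mulr0 => /eqP.
rewrite mulf_eq0 (negbTE fj) orbF expf_eq0 => /andP[_ /eqP l0].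
have := hR _ hj; rewrite /g hj l0 expr0n.
have -> : (N.-1 == 0)%N = false by lia.
rewrite mul0r => /esym/eqP; rewrite mulf_eq0 (negbTE fj) orbF => /eqP h0.
by rewrite (prodP_eq0 ((k %% T).+1)%N) // expr0n.
Qed.

Lemma k_le (k : nat) : (0 < k < T.+1)%N -> (k.-1 <= n)%N.
Proof. move=> /andP[h1 h2]; rewrite nT; nia. Qed.

Lemma bwd : lam ^+ n.+1 = \prod_(1 <= k < T.+1) (mu k * P) ->
  exists f, E f /\ exists2 k, (k <= n)%N & f k != 0.
Proof.
move=> hC; have hT0 : (0 < T)%N by [].
case: (eqVneq lam 0) => l0.
  have : \prod_(1 <= k < T.+1) (mu k * P) == 0 by rewrite -hC l0 expr0n.
  rewrite prodf_seq_eq0 => /hasP[k0]; rewrite mem_index_iota => hk0 /andP[_ /eqP hz]; change nat in k0.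
  pose f := fun i : nat => ((i == k0.-1)%N%:R : F).
  exists f; split; last first.
    by exists k0.-1; [apply: k_le | rewrite /f eqxx oner_neq0].
  apply: ShRr_E.
    move=> [|q] j hj hb; first by rewrite mul0n addn0 expr0 mul1r.
    rewrite l0 expr0n mul0r /f.
    have -> : (j + q.+1 * T == k0.-1)%N = false by rewrite mulSn; lia.
    by [].
  move=> m hm; rewrite l0 expr0n.
  have -> : (N.-1 == 0)%N = false by lia.
  rewrite mul0r /g hm /f; case: eqP => [e|_]; last by rewrite mulr0.
  rewrite mulr1; move/andP: hk0 => [hk1 _]; by rewrite e prednK.
pose h := fun m => (\prod_(1 <= k < m.+1) (mu k * P)) / lam ^+ (N.-1 * m).
pose f := fun k => lam ^+ (k %/ T) * h (k %% T)%N.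
have fsm m : (m < T)%N -> f m = h m by move=> hm; rewrite /f divn_small // modn_small // expr0 mul1r.
have h0 : h 0%N = 1 by rewrite /h big_geq // muln0 expr0 divr1.
exists f; split; last by exists 0%N => //; rewrite fsm // h0 oner_neq0.
apply: ShRr_E.
  move=> q j hj hb; rewrite /f addnC divnMDl // modnMDl divn_small // modn_small //.
  by rewrite addn0 expr0 mul1r.
move=> m hm; rewrite /g hm; case: ifP => hm1.
  rewrite (fsm m.+1) // (fsm m) // /h [in LHS]big_nat_recr //= mulnS exprD.
  field; apply/andP; split; exact: expf_neq0.
have eT : T = m.+1 by lia.
rewrite (fsm m) // fsm // h0 mulr1 /h.
move: hC; rewrite {1}eT big_nat_recr //= eT mulnS => hC.
have -> : lam ^+ N.-1 * lam = lam ^+ (N.-1 + N.-1 * m).+1 / lam ^+ (N.-1 * m).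
  rewrite exprS exprD; field; exact: expf_neq0.
rewrite hC; field; exact: expf_neq0.
Qed.


Definition dot (r v : 'rV[F]_n.+1) := \sum_j r 0 j * v 0 j.

Lemma dot0 v : dot 0 v = 0.
Proof. by rewrite /dot big1 // => j _; rewrite mxE mul0r. Qed.
Lemma dotD r1 r2 v : dot (r1 + r2) v = dot r1 v + dot r2 v.
Proof. by rewrite /dot -big_split; apply: eq_bigr => j _; rewrite mxE mulrDl. Qed.
Lemma dotZ c r v : dot (c *: r) v = c * dot r v.
Proof. by rewrite /dot mulr_sumr; apply: eq_bigr => j _; rewrite mxE mulrA. Qed.
Lemma dot_delta k v : dot (delta_mx 0 k) v = v 0 k.
Proof.
rewrite /dot (bigD1 k) //= mxE !eqxx mul1r big1 ?addr0 // => j /negbTE hj.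
by rewrite mxE hj andbF mul0r.
Qed.
Lemma dot_sum (s : seq nat) (P : pred nat) (r : nat -> 'rV[F]_n.+1) v :
  dot (\sum_(i <- s | P i) r i) v = \sum_(i <- s | P i) dot (r i) v.
Proof. exact: (big_morph (fun r => dot r v) (fun x y => dotD x y v) (dot0 v)). Qed.

Definition fv (v : 'rV[F]_n.+1) := fun k : nat => v 0 (inord k).

Lemma dot_ebasis k v : dot (ebasis n k) v = fv v k.-1.
Proof. by rewrite /ebasis dot_delta. Qed.

Lemma dot_rrow v m : dot (rrow N T a mu m) v = S (fv v) m.
Proof.
elim: m => [|m IH] /=; first by rewrite dot_ebasis.
rewrite dotZ dotD dotZ IH dot_sum; congr (_ * (_ + _)).
by apply: eq_bigr => l _; rewrite dotZ dot_ebasis addnS.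
Qed.

Lemma mulJ v (i : 'I_n.+1) : (v *m (Jmat N T a mu)^T) 0 i =
  if (i < (N - 2) * T + 1)%N then fv v (i + T)%N else S (fv v) (i - (N - 2) * T).
Proof.
rewrite mxE.
transitivity (\sum_j (if (i < (N - 2) * T + 1)%N then ebasis n (i + 1 + T)%N else rrow N T a mu (i - (N - 2) * T)) 0 j * v 0 j).
  by apply: eq_bigr => j _; rewrite mxE mxE mulrC; case: ifP.
case: ifP => _; rewrite -/(dot _ v) ?dot_rrow // dot_ebasis.
by congr (fv v _); rewrite addn1 addSn.
Qed.

Lemma transfer f1 f2 : (forall k, (k <= n)%N -> f1 k = f2 k) ->
  E f1 -> E f2.
Proof.
move=> heq hE; have hS := E_Sh hE; have hR := E_Rr hE.
have Tn : (T <= n)%N by rewrite nT; apply: leq_addl.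
apply: ShRr_E => //.
  move=> q j hj hb; rewrite -!heq //; [exact: hS | lia].
have hg m : (m <= T)%N -> g f2 m = g f1 m.
  by move=> hm; rewrite /g; case: ifP => _; rewrite heq //; lia.
by move=> m hm; rewrite !hg //; [exact: hR | lia].
Qed.

Lemma eig_iff : eigenvalue (Jmat N T a mu) lam <->
  exists f, E f /\ exists2 k, (k <= n)%N & f k != 0.
Proof.
rewrite eigenvalue_root_char -char_poly_tr -eigenvalue_root_char.
split.
  move=> /eigenvalueP[v hv vn0]; exists (fv v); split.
    move=> k hk; have := mulJ v (inord k); rewrite inordK // => <-.
    by rewrite hv mxE.
  have [i vi] : exists i, v 0 i != 0.
    apply/existsP; apply: contraNT vn0 => /existsPn h; apply/eqP/rowP => i.
    by rewrite mxE; apply/eqP; have := h i; rewrite negbK.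
  by exists i; [rewrite -ltnS ltn_ord | rewrite /fv inord_val].
move=> [f [hE [k hk fk]]].
pose v : 'rV[F]_n.+1 := \row_j f j.
have hv : forall k, (k <= n)%N -> fv v k = f k by move=> k' hk'; rewrite /fv mxE inordK.
have hE' : E (fv v) by apply: transfer hE => k' hk'; rewrite hv.
apply/eigenvalueP; exists v.
  apply/rowP => i; rewrite mulJ mxE hE'; last by rewrite -ltnS ltn_ord.
  by rewrite /fv inord_val.
by apply/eqP => h0; move: fk; rewrite -hv // h0 /fv mxE eqxx.
Qed.

Lemma root_pchar : root (pchar N T a mu) lam = (lam ^+ n.+1 == \prod_(1 <= k < T.+1) (mu k * P)).
Proof.
rewrite /root /pchar !hornerE horner_sum subr_eq0 big_split prodr_const_nat subSS subn0.
rewrite /P; congr (_ == _); congr (_ * _ ^+ _); apply: eq_bigr => l _; rewrite hornerZ hornerXn. by [].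
Qed.

Lemma core : eigenvalue (Jmat N T a mu) lam <-> root (pchar N T a mu) lam.
Proof.
rewrite eig_iff root_pchar; split.
  by move=> [f [hE hk]]; apply/eqP; apply: fwd hE hk.
by move/eqP; apply: bwd.
Qed.

End Pure.


Lemma map_rrow (R : realType) (N T : nat) (a mu : nat -> R) m j :
  real_complex R (rrow N T a mu m 0 j) =
  rrow N T (fun k => real_complex R (a k)) (fun k => real_complex R (mu k)) m 0 j.
Proof.
elim: m j => [|m IH] j /=; first by rewrite /ebasis !mxE rmorph_nat.
rewrite !mxE rmorphM rmorphD rmorphM -IH !summxE rmorph_sum.
congr (_ * (_ + _)); apply: eq_bigr => l _.
by rewrite !mxE rmorphM rmorph_nat.
Qed.

Lemma map_J (R : realType) (N T : nat) (a mu : nat -> R) :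
  map_mx (real_complex R) (Jmat N T a mu) =
  Jmat N T (fun k => real_complex R (a k)) (fun k => real_complex R (mu k)).
Proof.
apply/matrixP => i j; rewrite !mxE; case: ifP => _.
  by rewrite rmorph_nat.
by rewrite map_rrow.
Qed.

Lemma map_pchar (R : realType) (N T : nat) (a mu : nat -> R) :
  map_poly (real_complex R) (pchar N T a mu) =
  pchar N T (fun k => real_complex R (a k)) (fun k => real_complex R (mu k)).
Proof.
rewrite /pchar rmorphB /= map_polyXn rmorphM /= map_polyC /= rmorph_prod rmorphXn rmorph_sum.
congr (_ - _ * _ ^+ _); apply: eq_bigr => l _.
by rewrite -!mul_polyC rmorphM /= map_polyC map_polyXn.
Qed.

Theorem lemma1 (R : realType) (N T : nat) (a mu : nat -> R) :
  (2 <= N)%N -> (1 <= T)%N ->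
  \sum_(1 <= l < N.+1) a l = 1 ->
  forall lam : R[i],
    eigenvalue (map_mx (real_complex R) (Jmat N T a mu)) lam
    <-> root (map_poly (real_complex R) (pchar N T a mu)) lam.
Proof.
move=> HN HT _ lam; rewrite map_J map_pchar; exact: core.
Qed.
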